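(* Let $\xi=e_{12}-e_{14}$ and $U=\{x\in\mathbb R^4:x^2+x^4>0\}$. On $U$ use the coordinates $\tilde x^1=x^2+x^4$, $\tilde x^2=-x^1/(x^2+x^4)$, $\tilde x^3=x^3$, $\tilde x^4=\tfrac12(x^1)^2+x^2(x^2+x^4)$ (a diffeomorphism of $U$ onto $(0,\infty)\times\mathbb R^3$). Then a smooth covector field $A$ on $U$ satisfies $L_\xi A=0$ if and only if there are smooth functions $C_1,C_2,C_3,B$ of $(\tilde x^1,\tilde x^3,\tilde x^4)\in(0,\infty)\times\mathbb R^2$ such that $$A_1=C_2\tilde x^2+C_3,\quad A_2=\tfrac12C_2(\tilde x^2)^2+C_3\tilde x^2+C_1,\quad A_3=B,\quad A_4=A_2+C_2 .$$
   Context: Work in $\mathbb R^4$ with Galilean (Cartesian) coordinates $x^1,x^2,x^3,x^4$ of Minkowski space (metric $\mathrm{diag}(-1,-1,-1,1)$). A potential on an open set $U\subseteq\mathbb R^4$ is a smooth covector field $A=A_i\,dx^i$; its components $A_i$ are always those with respect to the coordinates $x^i$, even when written as functions of other variables. For a vector field $\xi=\xi^k\partial_k$ the Lie derivative is $(L_\xi A)_i=\xi^k\partial_kA_i+A_k\partial_i\xi^k$. The vector fields used are, by components $(\xi^1,\xi^2,\xi^3,\xi^4)$: $e_1=(1,0,0,0)$, $e_2=(0,1,0,0)$, $e_3=(0,0,1,0)$, $e_4=(0,0,0,1)$, $e_{12}=(-x^2,x^1,0,0)$, $e_{13}=(x^3,0,-x^1,0)$, $e_{23}=(0,-x^3,x^2,0)$,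 $e_{14}=(x^4,0,0,x^1)$, $e_{24}=(0,x^4,0,x^2)$, $e_{34}=(0,0,x^4,x^3)$. A potential admits a family of vector fields if $L_\xi A=0$ for each $\xi$ in it (equivalently for every element of their linear span). ''Functions'' are smooth real functions; $\mathrm{ch}=\cosh$, $\mathrm{sh}=\sinh$. *)

(* Defs.v *)
From Stdlib Require Import Reals List.
From Coquelicot Require Import Coquelicot.
Open Scope R_scope.

Definition R4 : Type := (R * R * R * R)%type.
(* Points (y1,y2,y3) of R^3 (used for (x~1, x~3, x~4)). *)
Definition R3 : Type := (R * R * R)%type.

Definition coord4 (x : R4) (i : nat) : R :=
  match x with (x1, x2, x3, x4) =>
    match i with 1%nat => x1 | 2%nat => x2 | 3%nat => x3 | 4%nat => x4 | _ => 0 end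
  end.

Definition upd4 (x : R4) (i : nat) (t : R) : R4 :=
  match x with (x1, x2, x3, x4) =>
    match i with
    | 1%nat => (t, x2, x3, x4) | 2%nat => (x1, t, x3, x4)
    | 3%nat => (x1, x2, t, x4) | 4%nat => (x1, x2, x3, t)
    | _ => x end
  end.

Definition coord3 (y : R3) (i : nat) : R :=
  match y with (y1, y2, y3) =>
    match i with 1%nat => y1 | 2%nat => y2 | 3%nat => y3 | _ => 0 end
  end.

Definition upd3 (y : R3) (i : nat) (t : R) : R3 :=
  match y with (y1, y2, y3) =>
    match i with
    | 1%nat => (t, y2, y3) | 2%nat => (y1, t, y3) | 3%nat => (y1, y2, t)
    | _ => y end
  end.

Definition pd4 (i : nat) (f : R4 -> R) : R4 -> R :=
  fun x => Derive (fun t => f (upd4 x i t)) (coord4 x i).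
Definition pd3 (i : nat) (f : R3 -> R) : R3 -> R :=
  fun y => Derive (fun t => f (upd3 y i t)) (coord3 y i).

Fixpoint dl4 (l : list nat) (f : R4 -> R) : R4 -> R :=
  match l with nil => f | i :: l' => pd4 i (dl4 l' f) end.
Fixpoint dl3 (l : list nat) (f : R3 -> R) : R3 -> R :=
  match l with nil => f | i :: l' => pd3 i (dl3 l' f) end.

Definition smooth4 (U : R4 -> Prop) (f : R4 -> R) : Prop :=
  forall (l : list nat) (x : R4), U x ->
    continuous (dl4 l f) x /\
    forall i : nat, ex_derive (fun t => dl4 l f (upd4 x i t)) (coord4 x i).
Definition smooth3 (V : R3 -> Prop) (f : R3 -> R) : Prop :=
  forall (l : list nat) (y : R3), V y ->
    continuous (dl3 l f) y /\
    forall i : nat, ex_derive (fun t => dl3 l f (upd3 y i t)) (coord3 y i).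

(* Vector fields and covector fields: components indexed by 1..4. *)
Definition vfield := nat -> R4 -> R.
Definition covfield := nat -> R4 -> R.

Definition sum4 (g : nat -> R) : R := g 1%nat + g 2%nat + g 3%nat + g 4%nat.

Definition lie (xi : vfield) (A : covfield) (i : nat) (x : R4) : R :=
  sum4 (fun k => xi k x * pd4 k (A i) x + A k x * pd4 i (xi k) x).

Definition e12 : vfield := fun k x =>
  match k with 1%nat => - coord4 x 2 | 2%nat => coord4 x 1 | _ => 0 end.
Definition e14 : vfield := fun k x =>
  match k with 1%nat => coord4 x 4 | 4%nat => coord4 x 1 | _ => 0 end.

Definition vf_sub (a b : vfield) : vfield := fun k x => a k x - b k x.

Definition Ugood (x : R4) : Prop := coord4 x 2 + coord4 x 4 > 0.
Definition Vgood (y : R3) : Prop := coord3 y 1 > 0.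

Definition tx1 (x : R4) : R := coord4 x 2 + coord4 x 4.
Definition tx2 (x : R4) : R := - coord4 x 1 / (coord4 x 2 + coord4 x 4).
Definition tx3 (x : R4) : R := coord4 x 3.
Definition tx4 (x : R4) : R :=
  / 2 * (coord4 x 1) ^ 2 + coord4 x 2 * (coord4 x 2 + coord4 x 4).

(* Main.v *)
Require Import Defs.
From Stdlib Require Import Reals List Lra Lia.
From Coquelicot Require Import Coquelicot.
Open Scope R_scope.

Definition near4 (p z : R4) (d : R) : Prop :=
  Rabs (coord4 z 1 - coord4 p 1) < d /\ Rabs (coord4 z 2 - coord4 p 2) < d /\
  Rabs (coord4 z 3 - coord4 p 3) < d /\ Rabs (coord4 z 4 - coord4 p 4) < d.
Definition near3 (p z : R3) (d : R) : Prop :=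
  Rabs (coord3 z 1 - coord3 p 1) < d /\ Rabs (coord3 z 2 - coord3 p 2) < d /\
  Rabs (coord3 z 3 - coord3 p 3) < d.

Lemma locally_near4 (p : R4) (P : R4 -> Prop) :
  locally p P <-> exists d, d > 0 /\ forall z, near4 p z d -> P z.
Proof.
  split.
  - intros [e He]. exists e. split; [apply cond_pos|].
    intros z Hz. apply He. destruct p as [[[p1 p2] p3] p4]; destruct z as [[[z1 z2] z3] z4].
    unfold near4 in Hz; simpl in Hz.
    repeat split; unfold ball; simpl; unfold AbsRing_ball, minus, plus, opp, abs; simpl; tauto.
  - intros [d [Hd H]]. exists (mkposreal d Hd). intros z Hz. apply H.
    destruct p as [[[p1 p2] p3] p4]; destruct z as [[[z1 z2] z3] z4].
    destruct Hz as [[[H1 H2] H3] H4].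
    revert H1 H2 H3 H4. unfold ball; simpl; unfold AbsRing_ball, minus, plus, opp, abs; simpl.
    unfold near4; simpl; tauto.
Qed.

Lemma locally_near3 (p : R3) (P : R3 -> Prop) :
  locally p P <-> exists d, d > 0 /\ forall z, near3 p z d -> P z.
Proof.
  split.
  - intros [e He]. exists e. split; [apply cond_pos|].
    intros z Hz. apply He. destruct p as [[p1 p2] p3]; destruct z as [[z1 z2] z3].
    unfold near3 in Hz; simpl in Hz.
    repeat split; unfold ball; simpl; unfold AbsRing_ball, minus, plus, opp, abs; simpl; tauto.
  - intros [d [Hd H]]. exists (mkposreal d Hd). intros z Hz. apply H.
    destruct p as [[p1 p2] p3]; destruct z as [[z1 z2] z3].
    destruct Hz as [[H1 H2] H3].
    revert H1 H2 H3. unfold ball; simpl; unfold AbsRing_ball, minus, plus, opp, abs; simpl.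
    unfold near3; simpl; tauto.
Qed.

Lemma cont4_eps (g : R4 -> R) p : continuous g p ->
  forall eps, eps > 0 -> exists d, d > 0 /\ forall z, near4 p z d -> Rabs (g z - g p) < eps.
Proof.
  intros Hc eps He. pose proof (proj1 (filterlim_locally g (g p)) Hc (mkposreal eps He)) as H.
  apply locally_near4 in H. destruct H as [d [Hd H]]. exists d; split; [exact Hd|].
  intros z Hz; now apply H in Hz.
Qed.

Lemma cont3_eps (g : R3 -> R) p : continuous g p ->
  forall eps, eps > 0 -> exists d, d > 0 /\ forall z, near3 p z d -> Rabs (g z - g p) < eps.
Proof.
  intros Hc eps He. pose proof (proj1 (filterlim_locally g (g p)) Hc (mkposreal eps He)) as H.
  apply locally_near3 in H. destruct H as [d [Hd H]]. exists d; split; [exact Hd|].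
  intros z Hz; now apply H in Hz.
Qed.

Lemma seg_help a b t : Rmin a b <= t <= Rmax a b -> Rabs (t - a) <= Rabs (b - a).
Proof. unfold Rmin, Rmax, Rabs; destruct (Rle_dec a b); repeat destruct Rcase_abs; lra. Qed.

Lemma seg_bound (g : R -> R) a b L eps :
  (forall t, Rabs (t - a) <= Rabs (b - a) -> ex_derive g t /\ Rabs (Derive g t - L) <= eps) ->
  Rabs (g b - g a - L * (b - a)) <= eps * Rabs (b - a).
Proof.
  intros H.
  destruct (MVT_gen g a b (Derive g)) as [c [Hc Heq]].
  - intros x Hx. apply Derive_correct. apply H. apply seg_help; lra.
  - intros x Hx. apply continuity_pt_filterlim. apply (ex_derive_continuous (V:=R_NormedModule)). apply H. apply seg_help; lra.
  - rewrite Heq. replace (Derive g c * (b - a) - L * (b - a)) with ((Derive g c - L) * (b - a)) by ring.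
    rewrite Rabs_mult. apply Rmult_le_compat_r; [apply Rabs_pos|]. apply H. apply seg_help; exact Hc.
Qed.

Definition lin4 (f : R4 -> R) (p z : R4) : R :=
  pd4 1 f p * (coord4 z 1 - coord4 p 1) + pd4 2 f p * (coord4 z 2 - coord4 p 2) +
  pd4 3 f p * (coord4 z 3 - coord4 p 3) + pd4 4 f p * (coord4 z 4 - coord4 p 4).
Definition nrm4 (p z : R4) : R :=
  Rabs (coord4 z 1 - coord4 p 1) + Rabs (coord4 z 2 - coord4 p 2) +
  Rabs (coord4 z 3 - coord4 p 3) + Rabs (coord4 z 4 - coord4 p 4).

Lemma diff4 (f : R4 -> R) p d0 : d0 > 0 ->
  (forall z, near4 p z d0 -> forall k, ex_derive (fun t => f (upd4 z k t)) (coord4 z k)) ->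
  (forall k, (1 <= k <= 4)%nat -> continuous (pd4 k f) p) ->
  forall eps, eps > 0 -> exists d, d > 0 /\ forall z, near4 p z d ->
    Rabs (f z - f p - lin4 f p z) <= eps * nrm4 p z.
Proof.
  intros Hd0 Hex Hc eps He.
  destruct (cont4_eps _ _ (Hc 1%nat ltac:(lia)) eps He) as [d1 [Hd1 H1]].
  destruct (cont4_eps _ _ (Hc 2%nat ltac:(lia)) eps He) as [d2 [Hd2 H2]].
  destruct (cont4_eps _ _ (Hc 3%nat ltac:(lia)) eps He) as [d3 [Hd3 H3]].
  destruct (cont4_eps _ _ (Hc 4%nat ltac:(lia)) eps He) as [d4 [Hd4 H4]].
  set (d := Rmin d0 (Rmin (Rmin d1 d2) (Rmin d3 d4))).
  assert (Hdd : d > 0 /\ d <= d0 /\ d <= d1 /\ d <= d2 /\ d <= d3 /\ d <= d4).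
  { unfold d. split; [repeat apply Rmin_glb_lt; lra|].
    split; [apply Rmin_l|].
    split; [eapply Rle_trans; [apply Rmin_r|]; eapply Rle_trans; [apply Rmin_l|]; apply Rmin_l|].
    split; [eapply Rle_trans; [apply Rmin_r|]; eapply Rle_trans; [apply Rmin_l|]; apply Rmin_r|].
    split; [eapply Rle_trans; [apply Rmin_r|]; eapply Rle_trans; [apply Rmin_r|]; apply Rmin_l|].
    eapply Rle_trans; [apply Rmin_r|]; eapply Rle_trans; [apply Rmin_r|]; apply Rmin_r. }
  clearbody d.
  exists d. split; [tauto|].
  destruct p as [[[p1 p2] p3] p4]. intros [[[z1 z2] z3] z4] Hz.
  unfold near4, lin4, nrm4 in *; simpl in *.
  destruct Hz as [Hz1 [Hz2 [Hz3 Hz4]]].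
  pose proof (seg_bound (fun t => f (t, z2, z3, z4)) p1 z1 (pd4 1 f (p1,p2,p3,p4)) eps) as S1.
  pose proof (seg_bound (fun t => f (p1, t, z3, z4)) p2 z2 (pd4 2 f (p1,p2,p3,p4)) eps) as S2.
  pose proof (seg_bound (fun t => f (p1, p2, t, z4)) p3 z3 (pd4 3 f (p1,p2,p3,p4)) eps) as S3.
  pose proof (seg_bound (fun t => f (p1, p2, p3, t)) p4 z4 (pd4 4 f (p1,p2,p3,p4)) eps) as S4.
  simpl in S1, S2, S3, S4.
  assert (A1 : Rabs (f (z1, z2, z3, z4) - f (p1, z2, z3, z4) - pd4 1 f (p1, p2, p3, p4) * (z1 - p1)) <= eps * Rabs (z1 - p1)).
  { apply S1. intros t Ht. split.
    - refine (Hex (t,z2,z3,z4) _ 1%nat); unfold near4; simpl; repeat split; lra.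
    - apply Rlt_le. refine (H1 (t,z2,z3,z4) _); unfold near4; simpl; repeat split; lra. }
  assert (A2 : Rabs (f (p1, z2, z3, z4) - f (p1, p2, z3, z4) - pd4 2 f (p1, p2, p3, p4) * (z2 - p2)) <= eps * Rabs (z2 - p2)).
  { apply S2. intros t Ht. split.
    - refine (Hex (p1,t,z3,z4) _ 2%nat); unfold near4; simpl; repeat split; try lra; unfold Rminus; rewrite Rplus_opp_r, Rabs_R0; lra.
    - apply Rlt_le. refine (H2 (p1,t,z3,z4) _); unfold near4; simpl; repeat split; try lra; unfold Rminus; rewrite Rplus_opp_r, Rabs_R0; lra. }
  assert (A3 : Rabs (f (p1, p2, z3, z4) - f (p1, p2, p3, z4) - pd4 3 f (p1, p2, p3, p4) * (z3 - p3)) <= eps * Rabs (z3 - p3)).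
  { apply S3. intros t Ht. split.
    - refine (Hex (p1,p2,t,z4) _ 3%nat); unfold near4; simpl; repeat split; try lra; unfold Rminus; rewrite ?Rplus_opp_r, ?Rabs_R0; lra.
    - apply Rlt_le. refine (H3 (p1,p2,t,z4) _); unfold near4; simpl; repeat split; try lra; unfold Rminus; rewrite ?Rplus_opp_r, ?Rabs_R0; lra. }
  assert (A4 : Rabs (f (p1, p2, p3, z4) - f (p1, p2, p3, p4) - pd4 4 f (p1, p2, p3, p4) * (z4 - p4)) <= eps * Rabs (z4 - p4)).
  { apply S4. intros t Ht. split.
    - refine (Hex (p1,p2,p3,t) _ 4%nat); unfold near4; simpl; repeat split; try lra; unfold Rminus; rewrite ?Rplus_opp_r, ?Rabs_R0; lra.
    - apply Rlt_le. refine (H4 (p1,p2,p3,t) _); unfold near4; simpl; repeat split; try lra; unfold Rminus; rewrite ?Rplus_opp_r, ?Rabs_R0; lra. }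
  set (a1 := f (z1, z2, z3, z4) - f (p1, z2, z3, z4) - pd4 1 f (p1, p2, p3, p4) * (z1 - p1)) in *.
  set (a2 := f (p1, z2, z3, z4) - f (p1, p2, z3, z4) - pd4 2 f (p1, p2, p3, p4) * (z2 - p2)) in *.
  set (a3 := f (p1, p2, z3, z4) - f (p1, p2, p3, z4) - pd4 3 f (p1, p2, p3, p4) * (z3 - p3)) in *.
  set (a4 := f (p1, p2, p3, z4) - f (p1, p2, p3, p4) - pd4 4 f (p1, p2, p3, p4) * (z4 - p4)) in *.
  replace (f (z1, z2, z3, z4) - f (p1, p2, p3, p4) -
    (pd4 1 f (p1, p2, p3, p4) * (z1 - p1) + pd4 2 f (p1, p2, p3, p4) * (z2 - p2) +
     pd4 3 f (p1, p2, p3, p4) * (z3 - p3) + pd4 4 f (p1, p2, p3, p4) * (z4 - p4)))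
    with (a1 + a2 + a3 + a4) by (unfold a1, a2, a3, a4; ring).
  eapply Rle_trans. apply Rabs_triang. eapply Rle_trans. apply Rplus_le_compat_r. apply Rabs_triang.
  eapply Rle_trans. apply Rplus_le_compat_r. apply Rplus_le_compat_r. apply Rabs_triang. lra.
Qed.

Lemma deriv_small (g : R -> R) t0 dg : is_derive g t0 dg ->
  forall e, e > 0 -> exists d, d > 0 /\ forall h, Rabs h < d ->
    Rabs (g (t0 + h) - g t0 - dg * h) <= e * Rabs h.
Proof.
  intros H e He. apply is_derive_Reals in H.
  destruct (H e He) as [d Hd]. exists d. split; [apply cond_pos|].
  intros h Hh. destruct (Req_dec h 0) as [->|Hn].
  - rewrite Rplus_0_r. replace (g t0 - g t0 - dg * 0) with 0 by ring. rewrite Rabs_R0. lra.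
  - specialize (Hd h Hn Hh).
    replace (g (t0 + h) - g t0 - dg * h) with (((g (t0 + h) - g t0) / h - dg) * h) by (field; exact Hn).
    rewrite Rabs_mult. apply Rmult_le_compat_r; [apply Rabs_pos|lra].
Qed.

Lemma small_bound g t0 dg e d : 
  (forall h, Rabs h < d -> Rabs (g (t0 + h) - g t0 - dg * h) <= e * Rabs h) ->
  forall h, Rabs h < d -> Rabs (g (t0 + h) - g t0) <= (Rabs dg + e) * Rabs h.
Proof.
  intros H h Hh. specialize (H h Hh).
  replace (g (t0 + h) - g t0) with ((g (t0 + h) - g t0 - dg * h) + dg * h) by ring.
  eapply Rle_trans; [apply Rabs_triang|]. rewrite Rabs_mult. lra.
Qed.

Lemma chain4 (f : R4 -> R) p d0 (g1 g2 g3 g4 : R -> R) t0 dg1 dg2 dg3 dg4 :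
  d0 > 0 ->
  (forall z, near4 p z d0 -> forall k, ex_derive (fun t => f (upd4 z k t)) (coord4 z k)) ->
  (forall k, (1 <= k <= 4)%nat -> continuous (pd4 k f) p) ->
  (g1 t0, g2 t0, g3 t0, g4 t0) = p ->
  is_derive g1 t0 dg1 -> is_derive g2 t0 dg2 -> is_derive g3 t0 dg3 -> is_derive g4 t0 dg4 ->
  is_derive (fun t => f (g1 t, g2 t, g3 t, g4 t)) t0
    (pd4 1 f p * dg1 + pd4 2 f p * dg2 + pd4 3 f p * dg3 + pd4 4 f p * dg4).
Proof.
  intros Hd0 Hex Hc Hp D1 D2 D3 D4.
  apply is_derive_Reals. intros eps He.
  set (P := Rabs (pd4 1 f p) + Rabs (pd4 2 f p) + Rabs (pd4 3 f p) + Rabs (pd4 4 f p) + 1).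
  assert (HP : P > 0) by (unfold P; pose proof (Rabs_pos (pd4 1 f p)); pose proof (Rabs_pos (pd4 2 f p));
     pose proof (Rabs_pos (pd4 3 f p)); pose proof (Rabs_pos (pd4 4 f p)); lra).
  set (e2 := eps / (2 * P)).
  assert (He2 : e2 > 0) by (unfold e2; apply Rdiv_lt_0_compat; lra).
  set (K := Rabs dg1 + Rabs dg2 + Rabs dg3 + Rabs dg4 + 4 * e2 + 1).
  assert (HK : K > 0) by (unfold K; pose proof (Rabs_pos dg1); pose proof (Rabs_pos dg2);
     pose proof (Rabs_pos dg3); pose proof (Rabs_pos dg4); lra).
  set (e1 := eps / (2 * K)).
  assert (He1 : e1 > 0) by (unfold e1; apply Rdiv_lt_0_compat; lra).
  destruct (diff4 f p d0 Hd0 Hex Hc e1 He1) as [dd [Hdd Hdiff]].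
  destruct (deriv_small _ _ _ D1 e2 He2) as [c1 [Hc1 S1]].
  destruct (deriv_small _ _ _ D2 e2 He2) as [c2 [Hc2 S2]].
  destruct (deriv_small _ _ _ D3 e2 He2) as [c3 [Hc3 S3]].
  destruct (deriv_small _ _ _ D4 e2 He2) as [c4 [Hc4 S4]].
  assert (Hpos : 0 < Rmin (Rmin c1 c2) (Rmin (Rmin c3 c4) (dd / K))).
  { repeat apply Rmin_glb_lt; try lra. apply Rdiv_lt_0_compat; lra. }
  exists (mkposreal _ Hpos). intros h Hh0 Hh. simpl in Hh.
  assert (Hh1 : Rabs h < c1) by (eapply Rlt_le_trans; [exact Hh|]; eapply Rle_trans; [apply Rmin_l|]; apply Rmin_l).
  assert (Hh2 : Rabs h < c2) by (eapply Rlt_le_trans; [exact Hh|]; eapply Rle_trans; [apply Rmin_l|]; apply Rmin_r).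
  assert (Hh3 : Rabs h < c3) by (eapply Rlt_le_trans; [exact Hh|]; eapply Rle_trans; [apply Rmin_r|]; eapply Rle_trans; [apply Rmin_l|]; apply Rmin_l).
  assert (Hh4 : Rabs h < c4) by (eapply Rlt_le_trans; [exact Hh|]; eapply Rle_trans; [apply Rmin_r|]; eapply Rle_trans; [apply Rmin_l|]; apply Rmin_r).
  assert (Hh5 : Rabs h < dd / K) by (eapply Rlt_le_trans; [exact Hh|]; eapply Rle_trans; [apply Rmin_r|]; apply Rmin_r).
  assert (HhK : Rabs h * K < dd) by (apply (Rmult_lt_compat_r K) in Hh5; [|lra]; unfold Rdiv in Hh5; rewrite Rmult_assoc, Rinv_l in Hh5; lra).
  pose proof (small_bound _ _ _ _ _ S1 h Hh1) as B1.
  pose proof (small_bound _ _ _ _ _ S2 h Hh2) as B2.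
  pose proof (small_bound _ _ _ _ _ S3 h Hh3) as B3.
  pose proof (small_bound _ _ _ _ _ S4 h Hh4) as B4.
  specialize (S1 h Hh1). specialize (S2 h Hh2). specialize (S3 h Hh3). specialize (S4 h Hh4).
  subst p.
  set (z := (g1 (t0 + h), g2 (t0 + h), g3 (t0 + h), g4 (t0 + h))).
  set (p := (g1 t0, g2 t0, g3 t0, g4 t0)) in *.
  pose proof (Rabs_pos dg1); pose proof (Rabs_pos dg2); pose proof (Rabs_pos dg3); pose proof (Rabs_pos dg4).
  assert (HN : nrm4 p z <= K * Rabs h).
  { unfold nrm4, z, p; simpl.
    assert ((Rabs dg1 + e2) * Rabs h + (Rabs dg2 + e2) * Rabs h + (Rabs dg3 + e2) * Rabs h + (Rabs dg4 + e2) * Rabs h <= K * Rabs h).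
    { unfold K. pose proof (Rabs_pos h). nra. }
    lra. }
  assert (Hnear : near4 p z dd).
  { unfold near4, z, p; simpl. pose proof (Rabs_pos h).
    assert ((Rabs dg1 + e2) * Rabs h <= K * Rabs h /\ (Rabs dg2 + e2) * Rabs h <= K * Rabs h /\
            (Rabs dg3 + e2) * Rabs h <= K * Rabs h /\ (Rabs dg4 + e2) * Rabs h <= K * Rabs h).
    { unfold K; repeat split; apply Rmult_le_compat_r; lra. }
    repeat split; lra. }
  specialize (Hdiff z Hnear).
  unfold lin4, z, p in Hdiff; simpl in Hdiff. unfold nrm4, z, p in HN; simpl in HN.
  unfold z, p in *.
  set (q1 := pd4 1 f (g1 t0, g2 t0, g3 t0, g4 t0)) in *.
  set (q2 := pd4 2 f (g1 t0, g2 t0, g3 t0, g4 t0)) in *.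
  set (q3 := pd4 3 f (g1 t0, g2 t0, g3 t0, g4 t0)) in *.
  set (q4 := pd4 4 f (g1 t0, g2 t0, g3 t0, g4 t0)) in *.
  set (F0 := f (g1 t0, g2 t0, g3 t0, g4 t0)) in *.
  set (F1 := f (g1 (t0 + h), g2 (t0 + h), g3 (t0 + h), g4 (t0 + h))) in *.
  assert (Hh0' : Rabs h > 0) by (apply Rabs_pos_lt; exact Hh0).
  replace ((F1 - F0) / h - (q1 * dg1 + q2 * dg2 + q3 * dg3 + q4 * dg4)) with
    (((F1 - F0 - (q1 * (g1 (t0 + h) - g1 t0) + q2 * (g2 (t0 + h) - g2 t0) + q3 * (g3 (t0 + h) - g3 t0) + q4 * (g4 (t0 + h) - g4 t0)))
      + (q1 * (g1 (t0 + h) - g1 t0 - dg1 * h) + q2 * (g2 (t0 + h) - g2 t0 - dg2 * h)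
       + q3 * (g3 (t0 + h) - g3 t0 - dg3 * h) + q4 * (g4 (t0 + h) - g4 t0 - dg4 * h))) / h)
    by (field; exact Hh0).
  unfold Rdiv. rewrite Rabs_mult, Rabs_inv.
  apply (Rmult_lt_reg_r (Rabs h)); [lra|]. rewrite Rmult_assoc, Rinv_l by lra. rewrite Rmult_1_r.
  set (E1 := F1 - F0 - _) in *.
  assert (HE1 : Rabs E1 <= eps / 2 * Rabs h).
  { eapply Rle_trans; [exact Hdiff|].
    apply Rle_trans with (e1 * (K * Rabs h)). apply Rmult_le_compat_l; [lra|exact HN].
    unfold e1. right. field. lra. }
  assert (HE2 : Rabs (q1 * (g1 (t0 + h) - g1 t0 - dg1 * h) + q2 * (g2 (t0 + h) - g2 t0 - dg2 * h)
       + q3 * (g3 (t0 + h) - g3 t0 - dg3 * h) + q4 * (g4 (t0 + h) - g4 t0 - dg4 * h)) <= (P - 1) * e2 * Rabs h).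
  { eapply Rle_trans; [apply Rabs_triang|]. eapply Rle_trans; [apply Rplus_le_compat_r, Rabs_triang|].
    eapply Rle_trans; [apply Rplus_le_compat_r, Rplus_le_compat_r, Rabs_triang|].
    rewrite !Rabs_mult. unfold P.
    pose proof (Rabs_pos q1); pose proof (Rabs_pos q2); pose proof (Rabs_pos q3); pose proof (Rabs_pos q4).
    fold q1 q2 q3 q4. nra. }
  assert (HPe : (P - 1) * e2 < eps / 2).
  { unfold e2. apply Rmult_lt_reg_r with (2 * P); [lra|].
    replace ((P - 1) * (eps / (2 * P)) * (2 * P)) with ((P - 1) * eps) by (field; lra). nra. }
  eapply Rle_lt_trans; [apply Rabs_triang|]. nra.
Qed.

Definition lin3 (f : R3 -> R) (p z : R3) : R :=
  pd3 1 f p * (coord3 z 1 - coord3 p 1) + pd3 2 f p * (coord3 z 2 - coord3 p 2) +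
  pd3 3 f p * (coord3 z 3 - coord3 p 3).
Definition nrm3 (p z : R3) : R :=
  Rabs (coord3 z 1 - coord3 p 1) + Rabs (coord3 z 2 - coord3 p 2) +
  Rabs (coord3 z 3 - coord3 p 3).

Lemma diff3 (f : R3 -> R) p d0 : d0 > 0 ->
  (forall z, near3 p z d0 -> forall k, ex_derive (fun t => f (upd3 z k t)) (coord3 z k)) ->
  (forall k, (1 <= k <= 3)%nat -> continuous (pd3 k f) p) ->
  forall eps, eps > 0 -> exists d, d > 0 /\ forall z, near3 p z d ->
    Rabs (f z - f p - lin3 f p z) <= eps * nrm3 p z.
Proof.
  intros Hd0 Hex Hc eps He.
  destruct (cont3_eps _ _ (Hc 1%nat ltac:(lia)) eps He) as [d1 [Hd1 H1]].
  destruct (cont3_eps _ _ (Hc 2%nat ltac:(lia)) eps He) as [d2 [Hd2 H2]].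
  destruct (cont3_eps _ _ (Hc 3%nat ltac:(lia)) eps He) as [d3 [Hd3 H3]].
  set (d := Rmin d0 (Rmin d1 (Rmin d2 d3))).
  assert (Hdd : d > 0 /\ d <= d0 /\ d <= d1 /\ d <= d2 /\ d <= d3).
  { unfold d. split; [repeat apply Rmin_glb_lt; lra|].
    split; [apply Rmin_l|].
    split; [eapply Rle_trans; [apply Rmin_r|]; apply Rmin_l|].
    split; [eapply Rle_trans; [apply Rmin_r|]; eapply Rle_trans; [apply Rmin_r|]; apply Rmin_l|].
    eapply Rle_trans; [apply Rmin_r|]; eapply Rle_trans; [apply Rmin_r|]; apply Rmin_r. }
  clearbody d.
  exists d. split; [tauto|].
  destruct p as [[p1 p2] p3]. intros [[z1 z2] z3] Hz.
  unfold near3, lin3, nrm3 in *; simpl in *.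
  destruct Hz as [Hz1 [Hz2 Hz3]].
  pose proof (seg_bound (fun t => f (t, z2, z3)) p1 z1 (pd3 1 f (p1,p2,p3)) eps) as S1.
  pose proof (seg_bound (fun t => f (p1, t, z3)) p2 z2 (pd3 2 f (p1,p2,p3)) eps) as S2.
  pose proof (seg_bound (fun t => f (p1, p2, t)) p3 z3 (pd3 3 f (p1,p2,p3)) eps) as S3.
  simpl in S1, S2, S3.
  assert (A1 : Rabs (f (z1, z2, z3) - f (p1, z2, z3) - pd3 1 f (p1, p2, p3) * (z1 - p1)) <= eps * Rabs (z1 - p1)).
  { apply S1. intros t Ht. split.
    - refine (Hex (t,z2,z3) _ 1%nat); unfold near3; simpl; repeat split; lra.
    - apply Rlt_le. refine (H1 (t,z2,z3) _); unfold near3; simpl; repeat split; lra. }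
  assert (A2 : Rabs (f (p1, z2, z3) - f (p1, p2, z3) - pd3 2 f (p1, p2, p3) * (z2 - p2)) <= eps * Rabs (z2 - p2)).
  { apply S2. intros t Ht. split.
    - refine (Hex (p1,t,z3) _ 2%nat); unfold near3; simpl; repeat split; try lra; unfold Rminus; rewrite Rplus_opp_r, Rabs_R0; lra.
    - apply Rlt_le. refine (H2 (p1,t,z3) _); unfold near3; simpl; repeat split; try lra; unfold Rminus; rewrite Rplus_opp_r, Rabs_R0; lra. }
  assert (A3 : Rabs (f (p1, p2, z3) - f (p1, p2, p3) - pd3 3 f (p1, p2, p3) * (z3 - p3)) <= eps * Rabs (z3 - p3)).
  { apply S3. intros t Ht. split.
    - refine (Hex (p1,p2,t) _ 3%nat); unfold near3; simpl; repeat split; try lra; unfold Rminus; rewrite ?Rplus_opp_r, ?Rabs_R0; lra.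
    - apply Rlt_le. refine (H3 (p1,p2,t) _); unfold near3; simpl; repeat split; try lra; unfold Rminus; rewrite ?Rplus_opp_r, ?Rabs_R0; lra. }
  set (a1 := f (z1, z2, z3) - f (p1, z2, z3) - pd3 1 f (p1, p2, p3) * (z1 - p1)) in *.
  set (a2 := f (p1, z2, z3) - f (p1, p2, z3) - pd3 2 f (p1, p2, p3) * (z2 - p2)) in *.
  set (a3 := f (p1, p2, z3) - f (p1, p2, p3) - pd3 3 f (p1, p2, p3) * (z3 - p3)) in *.
  replace (f (z1, z2, z3) - f (p1, p2, p3) -
    (pd3 1 f (p1, p2, p3) * (z1 - p1) + pd3 2 f (p1, p2, p3) * (z2 - p2) +
     pd3 3 f (p1, p2, p3) * (z3 - p3)))
    with (a1 + a2 + a3) by (unfold a1, a2, a3; ring).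
  eapply Rle_trans. apply Rabs_triang. eapply Rle_trans. apply Rplus_le_compat_r. apply Rabs_triang.
  lra.
Qed.

Lemma chain3 (f : R3 -> R) p d0 (g1 g2 g3 : R -> R) t0 dg1 dg2 dg3 :
  d0 > 0 ->
  (forall z, near3 p z d0 -> forall k, ex_derive (fun t => f (upd3 z k t)) (coord3 z k)) ->
  (forall k, (1 <= k <= 3)%nat -> continuous (pd3 k f) p) ->
  (g1 t0, g2 t0, g3 t0) = p ->
  is_derive g1 t0 dg1 -> is_derive g2 t0 dg2 -> is_derive g3 t0 dg3 ->
  is_derive (fun t => f (g1 t, g2 t, g3 t)) t0
    (pd3 1 f p * dg1 + pd3 2 f p * dg2 + pd3 3 f p * dg3).
Proof.
  intros Hd0 Hex Hc Hp D1 D2 D3.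
  apply is_derive_Reals. intros eps He.
  set (P := Rabs (pd3 1 f p) + Rabs (pd3 2 f p) + Rabs (pd3 3 f p) + 1).
  assert (HP : P > 0) by (unfold P; pose proof (Rabs_pos (pd3 1 f p)); pose proof (Rabs_pos (pd3 2 f p));
     pose proof (Rabs_pos (pd3 3 f p)); lra).
  set (e2 := eps / (2 * P)).
  assert (He2 : e2 > 0) by (unfold e2; apply Rdiv_lt_0_compat; lra).
  set (K := Rabs dg1 + Rabs dg2 + Rabs dg3 + 3 * e2 + 1).
  assert (HK : K > 0) by (unfold K; pose proof (Rabs_pos dg1); pose proof (Rabs_pos dg2);
     pose proof (Rabs_pos dg3); lra).
  set (e1 := eps / (2 * K)).
  assert (He1 : e1 > 0) by (unfold e1; apply Rdiv_lt_0_compat; lra).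
  destruct (diff3 f p d0 Hd0 Hex Hc e1 He1) as [dd [Hdd Hdiff]].
  destruct (deriv_small _ _ _ D1 e2 He2) as [c1 [Hc1 S1]].
  destruct (deriv_small _ _ _ D2 e2 He2) as [c2 [Hc2 S2]].
  destruct (deriv_small _ _ _ D3 e2 He2) as [c3 [Hc3 S3]].
  assert (Hpos : 0 < Rmin (Rmin c1 c2) (Rmin c3 (dd / K))).
  { repeat apply Rmin_glb_lt; try lra. apply Rdiv_lt_0_compat; lra. }
  exists (mkposreal _ Hpos). intros h Hh0 Hh. simpl in Hh.
  assert (Hh1 : Rabs h < c1) by (eapply Rlt_le_trans; [exact Hh|]; eapply Rle_trans; [apply Rmin_l|]; apply Rmin_l).
  assert (Hh2 : Rabs h < c2) by (eapply Rlt_le_trans; [exact Hh|]; eapply Rle_trans; [apply Rmin_l|]; apply Rmin_r).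
  assert (Hh3 : Rabs h < c3) by (eapply Rlt_le_trans; [exact Hh|]; eapply Rle_trans; [apply Rmin_r|]; apply Rmin_l).
  assert (Hh5 : Rabs h < dd / K) by (eapply Rlt_le_trans; [exact Hh|]; eapply Rle_trans; [apply Rmin_r|]; apply Rmin_r).
  assert (HhK : Rabs h * K < dd) by (apply (Rmult_lt_compat_r K) in Hh5; [|lra]; unfold Rdiv in Hh5; rewrite Rmult_assoc, Rinv_l in Hh5; lra).
  pose proof (small_bound _ _ _ _ _ S1 h Hh1) as B1.
  pose proof (small_bound _ _ _ _ _ S2 h Hh2) as B2.
  pose proof (small_bound _ _ _ _ _ S3 h Hh3) as B3.
  specialize (S1 h Hh1). specialize (S2 h Hh2). specialize (S3 h Hh3).
  subst p.
  set (z := (g1 (t0 + h), g2 (t0 + h), g3 (t0 + h))).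
  set (p := (g1 t0, g2 t0, g3 t0)) in *.
  pose proof (Rabs_pos dg1); pose proof (Rabs_pos dg2); pose proof (Rabs_pos dg3).
  assert (HN : nrm3 p z <= K * Rabs h).
  { unfold nrm3, z, p; simpl.
    assert ((Rabs dg1 + e2) * Rabs h + (Rabs dg2 + e2) * Rabs h + (Rabs dg3 + e2) * Rabs h <= K * Rabs h).
    { unfold K. pose proof (Rabs_pos h). nra. }
    lra. }
  assert (Hnear : near3 p z dd).
  { unfold near3, z, p; simpl. pose proof (Rabs_pos h).
    assert ((Rabs dg1 + e2) * Rabs h <= K * Rabs h /\ (Rabs dg2 + e2) * Rabs h <= K * Rabs h /\
            (Rabs dg3 + e2) * Rabs h <= K * Rabs h).
    { unfold K; repeat split; apply Rmult_le_compat_r; lra. }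
    repeat split; lra. }
  specialize (Hdiff z Hnear).
  unfold lin3, z, p in Hdiff; simpl in Hdiff. unfold nrm3, z, p in HN; simpl in HN.
  unfold z, p in *.
  set (q1 := pd3 1 f (g1 t0, g2 t0, g3 t0)) in *.
  set (q2 := pd3 2 f (g1 t0, g2 t0, g3 t0)) in *.
  set (q3 := pd3 3 f (g1 t0, g2 t0, g3 t0)) in *.
  set (F0 := f (g1 t0, g2 t0, g3 t0)) in *.
  set (F1 := f (g1 (t0 + h), g2 (t0 + h), g3 (t0 + h))) in *.
  assert (Hh0' : Rabs h > 0) by (apply Rabs_pos_lt; exact Hh0).
  replace ((F1 - F0) / h - (q1 * dg1 + q2 * dg2 + q3 * dg3)) with
    (((F1 - F0 - (q1 * (g1 (t0 + h) - g1 t0) + q2 * (g2 (t0 + h) - g2 t0) + q3 * (g3 (t0 + h) - g3 t0)))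
      + (q1 * (g1 (t0 + h) - g1 t0 - dg1 * h) + q2 * (g2 (t0 + h) - g2 t0 - dg2 * h)
       + q3 * (g3 (t0 + h) - g3 t0 - dg3 * h))) / h)
    by (field; exact Hh0).
  unfold Rdiv. rewrite Rabs_mult, Rabs_inv.
  apply (Rmult_lt_reg_r (Rabs h)); [lra|]. rewrite Rmult_assoc, Rinv_l by lra. rewrite Rmult_1_r.
  set (E1 := F1 - F0 - _) in *.
  assert (HE1 : Rabs E1 <= eps / 2 * Rabs h).
  { eapply Rle_trans; [exact Hdiff|].
    apply Rle_trans with (e1 * (K * Rabs h)). apply Rmult_le_compat_l; [lra|exact HN].
    unfold e1. right. field. lra. }
  assert (HE2 : Rabs (q1 * (g1 (t0 + h) - g1 t0 - dg1 * h) + q2 * (g2 (t0 + h) - g2 t0 - dg2 * h)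
       + q3 * (g3 (t0 + h) - g3 t0 - dg3 * h)) <= (P - 1) * e2 * Rabs h).
  { eapply Rle_trans; [apply Rabs_triang|]. eapply Rle_trans; [apply Rplus_le_compat_r, Rabs_triang|].
    rewrite !Rabs_mult. unfold P.
    pose proof (Rabs_pos q1); pose proof (Rabs_pos q2); pose proof (Rabs_pos q3).
    fold q1 q2 q3. nra. }
  assert (HPe : (P - 1) * e2 < eps / 2).
  { unfold e2. apply Rmult_lt_reg_r with (2 * P); [lra|].
    replace ((P - 1) * (eps / (2 * P)) * (2 * P)) with ((P - 1) * eps) by (field; lra). nra. }
  eapply Rle_lt_trans; [apply Rabs_triang|]. nra.
Qed.

Definition xi : vfield := vf_sub e12 e14.
Definition Dxi (u : R4 -> R) (x : R4) : R :=
  xi 1%nat x * pd4 1 u x + xi 2%nat x * pd4 2 u x + xi 3%nat x * pd4 3 u x + xi 4%nat x * pd4 4 u x.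

Ltac kill_derive :=
  repeat match goal with |- context [Derive ?f ?x] =>
    erewrite (is_derive_unique f x); [| auto_derive; [exact I | reflexivity]] end.

Lemma lie_expand (A : covfield) x :
  lie xi A 1%nat x = Dxi (A 1%nat) x + A 2%nat x - A 4%nat x /\
  lie xi A 2%nat x = Dxi (A 2%nat) x - A 1%nat x /\
  lie xi A 3%nat x = Dxi (A 3%nat) x /\
  lie xi A 4%nat x = Dxi (A 4%nat) x - A 1%nat x.
Proof.
  destruct x as [[[x1 x2] x3] x4].
  unfold lie, sum4, Dxi. unfold xi.
  unfold vf_sub, e12, e14; simpl.
  repeat match goal with |- context [pd4 ?k (A ?i) ?y] => let q := fresh "q" in set (q := pd4 k (A i) y) end.
  unfold pd4; simpl. kill_derive.
  split; [ring|]. split; [ring|]. split; ring.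
Qed.

Lemma locally_R (c : R) (P : R -> Prop) :
  (exists d, d > 0 /\ forall t, Rabs (t - c) < d -> P t) -> locally c P.
Proof.
  intros [d [Hd H]]. exists (mkposreal d Hd). intros t Ht. apply H. exact Ht.
Qed.

Lemma upd_coord4 x k : (1 <= k <= 4)%nat -> upd4 x k (coord4 x k) = x.
Proof.
  intros Hk. destruct x as [[[x1 x2] x3] x4].
  destruct k as [|[|[|[|[|k]]]]]; simpl; try reflexivity; lia.
Qed.

Lemma upd_coord4' x k : upd4 x k (coord4 x k) = x.
Proof.
  destruct x as [[[x1 x2] x3] x4].
  destruct k as [|[|[|[|[|k]]]]]; simpl; reflexivity.
Qed.

Lemma upd_coord3 y k : upd3 y k (coord3 y k) = y.
Proof.
  destruct y as [[y1 y2] y3].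
  destruct k as [|[|[|[|k]]]]; simpl; reflexivity.
Qed.

Lemma U_line x k : Ugood x -> locally (coord4 x k) (fun t => Ugood (upd4 x k t)).
Proof.
  intros Hx. apply locally_R. destruct x as [[[x1 x2] x3] x4]. unfold Ugood in *; simpl in *.
  exists ((x2 + x4) / 2). split; [lra|]. intros t Ht.
  destruct k as [|[|[|[|[|k]]]]]; simpl in *; try lra;
  apply Rabs_def2 in Ht; lra.
Qed.

Lemma V_line y k : Vgood y -> locally (coord3 y k) (fun t => Vgood (upd3 y k t)).
Proof.
  intros Hy. apply locally_R. destruct y as [[y1 y2] y3]. unfold Vgood in *; simpl in *.
  exists (y1 / 2). split; [lra|]. intros t Ht.
  destruct k as [|[|[|[|k]]]]; simpl in *; try lra;
  apply Rabs_def2 in Ht; lra.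
Qed.

Lemma pd4_ext (u v : R4 -> R) x k : (forall z, Ugood z -> u z = v z) -> Ugood x ->
  pd4 k u x = pd4 k v x.
Proof.
  intros H Hx. unfold pd4. apply Derive_ext_loc.
  generalize (U_line x k Hx). apply filter_imp. intros t Ht. apply H, Ht.
Qed.

Lemma pd3_ext (u v : R3 -> R) y k : (forall z, Vgood z -> u z = v z) -> Vgood y ->
  pd3 k u y = pd3 k v y.
Proof.
  intros H Hy. unfold pd3. apply Derive_ext_loc.
  generalize (V_line y k Hy). apply filter_imp. intros t Ht. apply H, Ht.
Qed.

Lemma ex4_ext (u v : R4 -> R) x k : (forall z, Ugood z -> u z = v z) -> Ugood x ->
  ex_derive (fun t => u (upd4 x k t)) (coord4 x k) -> ex_derive (fun t => v (upd4 x k t)) (coord4 x k).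
Proof.
  intros H Hx. apply ex_derive_ext_loc.
  generalize (U_line x k Hx). apply filter_imp. intros t Ht. apply H, Ht.
Qed.

Lemma ex3_ext (u v : R3 -> R) y k : (forall z, Vgood z -> u z = v z) -> Vgood y ->
  ex_derive (fun t => u (upd3 y k t)) (coord3 y k) -> ex_derive (fun t => v (upd3 y k t)) (coord3 y k).
Proof.
  intros H Hy. apply ex_derive_ext_loc.
  generalize (V_line y k Hy). apply filter_imp. intros t Ht. apply H, Ht.
Qed.

Lemma chain4_sm (f : R4 -> R) p (g1 g2 g3 g4 : R -> R) t0 dg1 dg2 dg3 dg4 :
  smooth4 Ugood f -> Ugood p ->
  (g1 t0, g2 t0, g3 t0, g4 t0) = p ->
  is_derive g1 t0 dg1 -> is_derive g2 t0 dg2 -> is_derive g3 t0 dg3 -> is_derive g4 t0 dg4 ->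
  is_derive (fun t => f (g1 t, g2 t, g3 t, g4 t)) t0
    (pd4 1 f p * dg1 + pd4 2 f p * dg2 + pd4 3 f p * dg3 + pd4 4 f p * dg4).
Proof.
  intros Hs Hp. apply chain4 with (d0 := (coord4 p 2 + coord4 p 4) / 4).
  - unfold Ugood in Hp; lra.
  - intros z Hz k. apply (Hs nil z). unfold near4, Ugood in *.
    destruct Hz as [_ [H2 [_ H4]]]. apply Rabs_def2 in H2. apply Rabs_def2 in H4. lra.
  - intros k _. exact (proj1 (Hs (k :: nil) p Hp)).
Qed.

Lemma chain3_sm (f : R3 -> R) p (g1 g2 g3 : R -> R) t0 dg1 dg2 dg3 :
  smooth3 Vgood f -> Vgood p ->
  (g1 t0, g2 t0, g3 t0) = p ->
  is_derive g1 t0 dg1 -> is_derive g2 t0 dg2 -> is_derive g3 t0 dg3 ->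
  is_derive (fun t => f (g1 t, g2 t, g3 t)) t0
    (pd3 1 f p * dg1 + pd3 2 f p * dg2 + pd3 3 f p * dg3).
Proof.
  intros Hs Hp. apply chain3 with (d0 := coord3 p 1 / 2).
  - unfold Vgood in Hp; lra.
  - intros z Hz k. apply (Hs nil z). unfold near3, Vgood in *.
    destruct Hz as [H1 _]. apply Rabs_def2 in H1. lra.
  - intros k _. exact (proj1 (Hs (k :: nil) p Hp)).
Qed.

Definition hasd (u : R4 -> R) (x : R4) : Prop :=
  forall k, ex_derive (fun t => u (upd4 x k t)) (coord4 x k).

Lemma hasd_plus u v x : hasd u x -> hasd v x -> hasd (fun z => u z + v z) x.
Proof. intros Hu Hv k. apply (ex_derive_plus (fun t => u (upd4 x k t)) (fun t => v (upd4 x k t))); auto. Qed.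
Lemma hasd_mult u v x : hasd u x -> hasd v x -> hasd (fun z => u z * v z) x.
Proof. intros Hu Hv k. apply (ex_derive_mult (fun t => u (upd4 x k t)) (fun t => v (upd4 x k t))); auto. Qed.
Lemma hasd_const c x : hasd (fun _ => c) x.
Proof. intros k. apply ex_derive_const. Qed.

Lemma pd4_plus u v x k : hasd u x -> hasd v x -> pd4 k (fun z => u z + v z) x = pd4 k u x + pd4 k v x.
Proof. intros Hu Hv. unfold pd4. apply (Derive_plus (fun t => u (upd4 x k t)) (fun t => v (upd4 x k t))); auto. Qed.
Lemma pd4_mult u v x k : hasd u x -> hasd v x -> pd4 k (fun z => u z * v z) x = pd4 k u x * v x + u x * pd4 k v x.
Proof.
  intros Hu Hv. unfold pd4. rewrite (Derive_mult (fun t => u (upd4 x k t)) (fun t => v (upd4 x k t))); auto.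
  rewrite upd_coord4'. reflexivity.
Qed.
Lemma pd4_const c x k : pd4 k (fun _ => c) x = 0.
Proof. unfold pd4. apply Derive_const. Qed.

Lemma Dxi_plus u v x : hasd u x -> hasd v x -> Dxi (fun z => u z + v z) x = Dxi u x + Dxi v x.
Proof. intros Hu Hv. unfold Dxi. rewrite !pd4_plus by auto. ring. Qed.
Lemma Dxi_mult u v x : hasd u x -> hasd v x -> Dxi (fun z => u z * v z) x = Dxi u x * v x + u x * Dxi v x.
Proof. intros Hu Hv. unfold Dxi. rewrite !pd4_mult by auto. ring. Qed.
Lemma Dxi_const c x : Dxi (fun _ => c) x = 0.
Proof. unfold Dxi. rewrite !pd4_const. ring. Qed.
Lemma Dxi_ext u v x : (forall z, Ugood z -> u z = v z) -> Ugood x -> Dxi u x = Dxi v x.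
Proof. intros H Hx. unfold Dxi. rewrite !(pd4_ext u v x _ H Hx). reflexivity. Qed.
Lemma hasd_ext u v x : (forall z, Ugood z -> u z = v z) -> Ugood x -> hasd u x -> hasd v x.
Proof. intros H Hx Hu k. apply (ex4_ext u v x k H Hx), Hu. Qed.

Definition Y (x : R4) : R3 := (tx1 x, tx3 x, tx4 x).

Lemma xi_val x1 x2 x3 x4 :
  xi 1%nat (x1,x2,x3,x4) = - x2 - x4 /\ xi 2%nat (x1,x2,x3,x4) = x1 /\
  xi 3%nat (x1,x2,x3,x4) = 0 /\ xi 4%nat (x1,x2,x3,x4) = - x1.
Proof. unfold xi, vf_sub, e12, e14; simpl. repeat split; ring. Qed.

Ltac dsolve := auto_derive; repeat split; try exact I; try field.

Lemma CY_props (C : R3 -> R) x : smooth3 Vgood C -> Ugood x ->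
  hasd (fun z => C (Y z)) x /\ Dxi (fun z => C (Y z)) x = 0.
Proof.
  intros Hs Hx. destruct x as [[[x1 x2] x3] x4]. unfold Ugood in Hx; simpl in Hx.
  set (p := (x2 + x4, x3, / 2 * x1 ^ 2 + x2 * (x2 + x4))).
  assert (Hp : Vgood p) by (unfold Vgood, p; simpl; lra).
  assert (D1 : is_derive (fun t => C (Y (upd4 (x1,x2,x3,x4) 1 t))) x1
                  (pd3 1 C p * 0 + pd3 2 C p * 0 + pd3 3 C p * x1)).
  { unfold Y, tx1, tx3, tx4; simpl.
    apply (chain3_sm C p (fun _ => x2 + x4) (fun _ => x3) (fun t => / 2 * t ^ 2 + x2 * (x2 + x4))); auto; dsolve. }
  assert (D2 : is_derive (fun t => C (Y (upd4 (x1,x2,x3,x4) 2 t))) x2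
                  (pd3 1 C p * 1 + pd3 2 C p * 0 + pd3 3 C p * (2 * x2 + x4))).
  { unfold Y, tx1, tx3, tx4; simpl.
    apply (chain3_sm C p (fun t => t + x4) (fun _ => x3) (fun t => / 2 * x1 ^ 2 + t * (t + x4))); auto; dsolve. }
  assert (D3 : is_derive (fun t => C (Y (upd4 (x1,x2,x3,x4) 3 t))) x3
                  (pd3 1 C p * 0 + pd3 2 C p * 1 + pd3 3 C p * 0)).
  { unfold Y, tx1, tx3, tx4; simpl.
    apply (chain3_sm C p (fun _ => x2 + x4) (fun t => t) (fun _ => / 2 * x1 ^ 2 + x2 * (x2 + x4))); auto; dsolve. }
  assert (D4 : is_derive (fun t => C (Y (upd4 (x1,x2,x3,x4) 4 t))) x4
                  (pd3 1 C p * 1 + pd3 2 C p * 0 + pd3 3 C p * x2)).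
  { unfold Y, tx1, tx3, tx4; simpl.
    apply (chain3_sm C p (fun t => x2 + t) (fun _ => x3) (fun t => / 2 * x1 ^ 2 + x2 * (x2 + t))); auto; dsolve. }
  split.
  - intros k. destruct k as [|[|[|[|[|k]]]]].
    + simpl. apply ex_derive_const.
    + eexists; exact D1.
    + eexists; exact D2.
    + eexists; exact D3.
    + eexists; exact D4.
    + simpl. apply ex_derive_const.
  - unfold Dxi, pd4. cbv beta. simpl coord4.
    rewrite (is_derive_unique (fun t : R => C (Y (upd4 (x1,x2,x3,x4) 1 t))) _ _ D1),
      (is_derive_unique (fun t : R => C (Y (upd4 (x1,x2,x3,x4) 2 t))) _ _ D2),
      (is_derive_unique (fun t : R => C (Y (upd4 (x1,x2,x3,x4) 3 t))) _ _ D3),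
      (is_derive_unique (fun t : R => C (Y (upd4 (x1,x2,x3,x4) 4 t))) _ _ D4).
    destruct (xi_val x1 x2 x3 x4) as [-> [-> [-> ->]]]. ring.
Qed.

Lemma tx2_props x : Ugood x -> hasd tx2 x /\ Dxi tx2 x = 1.
Proof.
  intros Hx. destruct x as [[[x1 x2] x3] x4]. unfold Ugood in Hx; simpl in Hx.
  assert (D1 : is_derive (fun t => tx2 (upd4 (x1,x2,x3,x4) 1 t)) x1 (- / (x2 + x4))).
  { unfold tx2; simpl. auto_derive; repeat split; try lra; try (field; lra); try ring. }
  assert (D2 : is_derive (fun t => tx2 (upd4 (x1,x2,x3,x4) 2 t)) x2 (x1 / (x2 + x4) ^ 2)).
  { unfold tx2; simpl. auto_derive; repeat split; try lra; try (field; lra); try ring. }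
  assert (D3 : is_derive (fun t => tx2 (upd4 (x1,x2,x3,x4) 3 t)) x3 0).
  { unfold tx2; simpl. auto_derive; repeat split; try lra; try (field; lra); try ring. }
  assert (D4 : is_derive (fun t => tx2 (upd4 (x1,x2,x3,x4) 4 t)) x4 (x1 / (x2 + x4) ^ 2)).
  { unfold tx2; simpl. auto_derive; repeat split; try lra; try (field; lra); try ring. }
  split.
  - intros k. destruct k as [|[|[|[|[|k]]]]].
    + simpl. apply ex_derive_const.
    + eexists; exact D1.
    + eexists; exact D2.
    + eexists; exact D3.
    + eexists; exact D4.
    + simpl. apply ex_derive_const.
  - unfold Dxi, pd4. cbv beta. simpl coord4.
    rewrite (is_derive_unique (fun t : R => tx2 (upd4 (x1,x2,x3,x4) 1 t)) _ _ D1),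
      (is_derive_unique (fun t : R => tx2 (upd4 (x1,x2,x3,x4) 2 t)) _ _ D2),
      (is_derive_unique (fun t : R => tx2 (upd4 (x1,x2,x3,x4) 3 t)) _ _ D3),
      (is_derive_unique (fun t : R => tx2 (upd4 (x1,x2,x3,x4) 4 t)) _ _ D4).
    destruct (xi_val x1 x2 x3 x4) as [-> [-> [-> ->]]]. field. lra.
Qed.

Lemma backward (A : covfield) (C1 C2 C3 B : R3 -> R) :
  smooth3 Vgood C1 -> smooth3 Vgood C2 -> smooth3 Vgood C3 -> smooth3 Vgood B ->
  (forall x, Ugood x ->
     A 1%nat x = C2 (Y x) * tx2 x + C3 (Y x) /\
     A 2%nat x = / 2 * C2 (Y x) * (tx2 x) ^ 2 + C3 (Y x) * tx2 x + C1 (Y x) /\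
     A 3%nat x = B (Y x) /\
     A 4%nat x = A 2%nat x + C2 (Y x)) ->
  forall i x, (1 <= i <= 4)%nat -> Ugood x -> lie (vf_sub e12 e14) A i x = 0.
Proof.
  intros S1 S2 S3 SB HA i x Hi Hx.
  change (vf_sub e12 e14) with xi.
  destruct (CY_props C1 x S1 Hx) as [h1 d1].
  destruct (CY_props C2 x S2 Hx) as [h2 d2].
  destruct (CY_props C3 x S3 Hx) as [h3 d3].
  destruct (CY_props B x SB Hx) as [hB dB].
  destruct (tx2_props x Hx) as [ht dt].
  set (c1 := fun z => C1 (Y z)) in *.
  set (c2 := fun z => C2 (Y z)) in *.
  set (c3 := fun z => C3 (Y z)) in *.
  set (b := fun z => B (Y z)) in *.
  assert (E1 : Dxi (A 1%nat) x = c2 x).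
  { rewrite (Dxi_ext (A 1%nat) (fun z => (fun z => c2 z * tx2 z) z + c3 z) x); [|intros z Hz; apply HA, Hz|exact Hx].
    rewrite (Dxi_plus (fun z => c2 z * tx2 z) c3 x); [|apply hasd_mult; auto|auto].
    rewrite (Dxi_mult c2 tx2 x); auto. rewrite d2, d3, dt. ring. }
  assert (E2 : Dxi (A 2%nat) x = A 1%nat x).
  { rewrite (Dxi_ext (A 2%nat) (fun z => (fun z => (fun z => / 2 * c2 z) z * (fun z => tx2 z * tx2 z) z) z
                                      + (fun z => c3 z * tx2 z) z + c1 z) x);
      [|intros z Hz; rewrite (proj1 (proj2 (HA z Hz))); unfold c1, c2, c3; ring|exact Hx].
    assert (Hc2' : hasd (fun z => / 2 * c2 z) x) by (apply (hasd_mult (fun _ => / 2) c2); auto; apply hasd_const).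
    assert (Htt : hasd (fun z => tx2 z * tx2 z) x) by (apply (hasd_mult tx2 tx2); auto).
    rewrite (Dxi_plus _ c1 x); [|apply hasd_plus; apply hasd_mult; auto|auto].
    rewrite (Dxi_plus _ (fun z => c3 z * tx2 z) x); [|apply hasd_mult; auto|apply hasd_mult; auto].
    rewrite (Dxi_mult (fun z => / 2 * c2 z) (fun z => tx2 z * tx2 z) x); auto.
    rewrite (Dxi_mult (fun _ => / 2) c2 x); auto; [|apply hasd_const].
    rewrite (Dxi_mult tx2 tx2 x); auto. rewrite (Dxi_mult c3 tx2 x); auto.
    rewrite Dxi_const, d1, d2, d3, dt. rewrite (proj1 (HA x Hx)). unfold c2, c3. simpl; lra. }
  assert (E3 : Dxi (A 3%nat) x = 0).
  { rewrite (Dxi_ext (A 3%nat) b x); [exact dB|intros z Hz; apply HA, Hz|exact Hx]. }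
  assert (E4 : Dxi (A 4%nat) x = A 1%nat x).
  { rewrite (Dxi_ext (A 4%nat) (fun z => A 2%nat z + c2 z) x); [|intros z Hz; apply HA, Hz|exact Hx].
    assert (h2A : hasd (A 2%nat) x).
    { apply (hasd_ext (fun z => (fun z => (fun z => / 2 * c2 z) z * (fun z => tx2 z * tx2 z) z) z
                                      + (fun z => c3 z * tx2 z) z + c1 z)); auto.
      - intros z Hz; rewrite (proj1 (proj2 (HA z Hz))); unfold c1, c2, c3; ring.
      - apply hasd_plus; [apply hasd_plus|auto]; apply hasd_mult; auto; apply hasd_mult; auto; apply hasd_const. }
    rewrite (Dxi_plus (A 2%nat) c2 x); auto. rewrite E2, d2. ring. }
  destruct (lie_expand A x) as [L1 [L2 [L3 L4]]].
  destruct (HA x Hx) as [_ [_ [_ H4]]].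
  destruct i as [|[|[|[|[|i]]]]]; try lia.
  - rewrite L1, E1, H4. unfold c2. ring.
  - rewrite L2, E2. ring.
  - rewrite L3, E3. ring.
  - rewrite L4, E4. ring.
Qed.

Lemma cont_pair {U V W : UniformSpace} (a : U -> V) (b : U -> W) y :
  continuous a y -> continuous b y -> continuous (fun z => (a z, b z)) y.
Proof.
  intros Ha Hb. apply (continuous_comp_2 a b (fun u v => (u, v))); auto.
  apply continuous_ext with (f := fun x0 => x0). intros [u v]; reflexivity. apply continuous_id.
Qed.

Lemma cont_coord3 j (y : R3) : continuous (fun z => coord3 z j) y.
Proof.
  destruct y as [[y1 y2] y3].
  destruct j as [|[|[|[|j]]]].
  - apply continuous_ext with (f := fun _ => 0). intros [[a b] c]; reflexivity. apply continuous_const.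
  - apply continuous_ext with (f := fun z : R3 => fst (fst z)). intros [[a b] c]; reflexivity.
    apply (continuous_comp (@fst (R*R) R) fst). apply continuous_fst. apply continuous_fst.
  - apply continuous_ext with (f := fun z : R3 => snd (fst z)). intros [[a b] c]; reflexivity.
    apply (continuous_comp (@fst (R*R) R) snd). apply continuous_fst. apply continuous_snd.
  - apply continuous_ext with (f := fun z : R3 => snd z). intros [[a b] c]; reflexivity.
    apply continuous_snd.
  - apply continuous_ext with (f := fun _ => 0). intros [[a b] c]; reflexivity. apply continuous_const.
Qed.

Lemma smooth4_pd f k : smooth4 Ugood f -> smooth4 Ugood (pd4 k f).
Proof.
  intros Hs l x Hx.
  assert (E : dl4 l (pd4 k f) = dl4 (l ++ k :: nil) f).
  { induction l as [|i l IH]; simpl; [reflexivity|]. rewrite IH. reflexivity. }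
  rewrite E. apply Hs, Hx.
Qed.

Definition P0 (g : R3 -> R) : Prop :=
  forall y, Vgood y -> continuous g y /\ forall i, ex_derive (fun t => g (upd3 y i t)) (coord3 y i).

Lemma V_open y : Vgood y -> locally y Vgood.
Proof.
  intros Hy. apply locally_near3. exists (coord3 y 1 / 2). unfold Vgood in *. split; [lra|].
  intros z [Hz _]. apply Rabs_def2 in Hz. lra.
Qed.

Lemma family_smooth (G : (R3 -> R) -> Prop) :
  (forall g, G g -> P0 g) ->
  (forall g i, G g -> exists g', G g' /\ forall y, Vgood y -> pd3 i g y = g' y) ->
  forall g, (exists g0, G g0 /\ forall y, Vgood y -> g y = g0 y) -> smooth3 Vgood g.
Proof.
  intros HP Hd g Hg.
  assert (K : forall l, exists g1, G g1 /\ forall y, Vgood y -> dl3 l g y = g1 y).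
  { induction l as [|i l IH]; simpl; [exact Hg|].
    destruct IH as [g1 [G1 E1]]. destruct (Hd g1 i G1) as [g2 [G2 E2]].
    exists g2. split; auto. intros y Hy. rewrite <- E2 by auto. apply pd3_ext; auto. }
  intros l y Hy. destruct (K l) as [g1 [G1 E1]]. destruct (HP g1 G1 y Hy) as [Hc He].
  split.
  - apply continuous_ext_loc with (g := g1); [|exact Hc].
    generalize (V_open y Hy). apply filter_imp. intros z Hz. symmetry. apply E1, Hz.
  - intros i. apply (ex3_ext g1 (dl3 l g) y i); auto. intros z Hz; symmetry; apply E1, Hz.
Qed.

Definition sig (y : R3) : R4 :=
  (0, coord3 y 3 * / coord3 y 1, coord3 y 2, coord3 y 1 - coord3 y 3 * / coord3 y 1).

Definition ds (i k : nat) (y : R3) : R :=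
  match i, k with
  | 1%nat, 2%nat => (-1) * (coord3 y 3 * (/ coord3 y 1 * / coord3 y 1))
  | 1%nat, 4%nat => 1 + coord3 y 3 * (/ coord3 y 1 * / coord3 y 1)
  | 2%nat, 3%nat => 1
  | 3%nat, 2%nat => / coord3 y 1
  | 3%nat, 4%nat => (-1) * / coord3 y 1
  | _, _ => 0
  end.

Lemma sig_U y : Vgood y -> Ugood (sig y).
Proof. intros Hy. destruct y as [[y1 y2] y3]. unfold Ugood, Vgood, sig in *; simpl in *. lra. Qed.

Lemma sigma_deriv f y i : smooth4 Ugood f -> Vgood y ->
  is_derive (fun t => f (sig (upd3 y i t))) (coord3 y i)
    (pd4 1 f (sig y) * ds i 1 y + pd4 2 f (sig y) * ds i 2 y +
     pd4 3 f (sig y) * ds i 3 y + pd4 4 f (sig y) * ds i 4 y).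
Proof.
  intros Hs Hy. pose proof (sig_U y Hy) as HU.
  destruct y as [[y1 y2] y3]. unfold Vgood in Hy; simpl in Hy.
  destruct i as [|[|[|[|i]]]]; unfold sig, ds; simpl.
  - apply (chain4_sm f _ (fun _ => 0) (fun _ => y3 * / y1) (fun _ => y2) (fun _ => y1 - y3 * / y1)); auto;
      auto_derive; auto.
  - apply (chain4_sm f _ (fun _ => 0) (fun t => y3 * / t) (fun _ => y2) (fun t => t - y3 * / t)); auto;
      auto_derive; repeat split; try lra; try (field; lra).
  - apply (chain4_sm f _ (fun _ => 0) (fun _ => y3 * / y1) (fun t => t) (fun _ => y1 - y3 * / y1)); auto;
      auto_derive; auto.
  - apply (chain4_sm f _ (fun _ => 0) (fun t => t * / y1) (fun _ => y2) (fun t => y1 - t * / y1)); auto;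
      auto_derive; repeat split; try lra; try (field; lra).
  - apply (chain4_sm f _ (fun _ => 0) (fun _ => y3 * / y1) (fun _ => y2) (fun _ => y1 - y3 * / y1)); auto;
      auto_derive; auto.
Qed.
Set Bullet Behavior "Strict Subproofs".

Inductive G : (R3 -> R) -> Prop :=
| GA : forall f, smooth4 Ugood f -> G (fun y => f (sig y))
| Gc : forall c, G (fun _ => c)
| Gx : forall j, G (fun y => coord3 y j)
| Ginv : G (fun y => / coord3 y 1)
| Gplus : forall f g, G f -> G g -> G (fun y => f y + g y)
| Gmult : forall f g, G f -> G g -> G (fun y => f y * g y).

Ltac Gtac := repeat match goal with
  | |- G (fun y => _ + _) => apply Gplus
  | |- G (fun y => _ * _) => apply Gmult
  | |- G (fun y => coord3 _ _) => apply Gx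
  | |- G (fun y => / coord3 _ 1) => apply Ginv
  | |- G (fun _ => _) => apply Gc
  end.

Lemma ds_G i k : G (fun y => ds i k y).
Proof.
  destruct i as [|[|[|[|i]]]]; destruct k as [|[|[|[|[|k]]]]]; unfold ds; simpl; Gtac.
Qed.

Lemma cont_inv1 y : Vgood y -> continuous (fun z => / coord3 z 1) y.
Proof.
  intros Hy. apply (continuous_comp (fun z => coord3 z 1) Rinv). apply cont_coord3.
  apply continuous_Rinv. unfold Vgood in Hy. lra.
Qed.

Lemma cont_sig y : Vgood y -> continuous sig y.
Proof.
  intros Hy. unfold sig.
  repeat apply cont_pair.
  - apply continuous_const.
  - apply (continuous_mult (fun z => coord3 z 3) (fun z => / coord3 z 1)). apply cont_coord3. apply cont_inv1, Hy.
  - apply cont_coord3.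
  - apply (continuous_plus (fun z => coord3 z 1) (fun z => - (coord3 z 3 * / coord3 z 1))). apply cont_coord3.
    apply (continuous_opp (fun z => coord3 z 3 * / coord3 z 1)).
    apply (continuous_mult (fun z => coord3 z 3) (fun z => / coord3 z 1)). apply cont_coord3. apply cont_inv1, Hy.
Qed.

Lemma G_P0 g : G g -> P0 g.
Proof.
  induction 1; intros y Hy.
  - split.
    + apply (continuous_comp sig f). apply cont_sig, Hy. exact (proj1 (H nil (sig y) (sig_U y Hy))).
    + intros i. eexists. apply sigma_deriv; auto.
  - split. apply continuous_const. intros i. apply ex_derive_const.
  - split. apply cont_coord3. intros i. destruct y as [[y1 y2] y3].
    destruct i as [|[|[|[|i]]]]; destruct j as [|[|[|[|j]]]]; simpl;
      first [apply ex_derive_const | apply ex_derive_id].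
  - split. apply cont_inv1, Hy. intros i. destruct y as [[y1 y2] y3]. unfold Vgood in Hy; simpl in Hy.
    destruct i as [|[|[|[|i]]]]; simpl; try apply ex_derive_const.
    auto_derive. lra.
  - destruct (IHG1 y Hy) as [c1 e1]. destruct (IHG2 y Hy) as [c2 e2]. split.
    + apply (continuous_plus f g); auto.
    + intros i. apply (ex_derive_plus (fun t => f (upd3 y i t)) (fun t => g (upd3 y i t))); auto.
  - destruct (IHG1 y Hy) as [c1 e1]. destruct (IHG2 y Hy) as [c2 e2]. split.
    + apply (continuous_mult f g); auto.
    + intros i. apply (ex_derive_mult (fun t => f (upd3 y i t)) (fun t => g (upd3 y i t))); auto.
Qed.

Lemma G_deriv g i : G g -> exists g', G g' /\ forall y, Vgood y -> pd3 i g y = g' y.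
Proof.
  intros HG. pose proof (G_P0 g HG) as HP0. induction HG.
  - exists (fun y => (fun y => (fun y => (fun y => pd4 1 f (sig y) * ds i 1 y) y + (fun y => pd4 2 f (sig y) * ds i 2 y) y) y +
                      (fun y => pd4 3 f (sig y) * ds i 3 y) y) y + (fun y => pd4 4 f (sig y) * ds i 4 y) y).
    split.
    + repeat apply Gplus; apply Gmult; try apply ds_G; apply GA; apply smooth4_pd; auto.
    + intros y Hy. unfold pd3. apply is_derive_unique. apply sigma_deriv; auto.
  - exists (fun _ => 0). split. apply Gc. intros y Hy. unfold pd3. apply Derive_const.
  - destruct i as [|[|[|[|i]]]]; destruct j as [|[|[|[|j]]]];
    [eexists; split; [apply Gc|]; intros [[y1 y2] y3] Hy; unfold pd3; simpl;
     apply is_derive_unique; auto_derive; [exact I| reflexivity] ..].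
  - destruct i as [|[|[|[|i]]]].
    2: { exists (fun y => (-1) * (/ coord3 y 1 * / coord3 y 1)). split. Gtac.
         intros [[y1 y2] y3] Hy. unfold Vgood in Hy; simpl in Hy. unfold pd3; simpl.
         apply is_derive_unique. auto_derive. lra. field. lra. }
    all: exists (fun _ => 0); split; [apply Gc|]; intros [[y1 y2] y3] Hy; unfold pd3; simpl; apply Derive_const.
  - destruct (IHHG1 (G_P0 _ HG1)) as [f' [Gf Ef]]. destruct (IHHG2 (G_P0 _ HG2)) as [g' [Gg Eg]].
    exists (fun y => f' y + g' y). split. apply Gplus; auto.
    intros y Hy. destruct (G_P0 _ HG1 y Hy) as [_ e1]. destruct (G_P0 _ HG2 y Hy) as [_ e2].
    unfold pd3. rewrite (Derive_plus (fun t => f (upd3 y i t)) (fun t => g (upd3 y i t))); auto.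
    rewrite <- Ef, <- Eg by auto. reflexivity.
  - destruct (IHHG1 (G_P0 _ HG1)) as [f' [Gf Ef]]. destruct (IHHG2 (G_P0 _ HG2)) as [g' [Gg Eg]].
    exists (fun y => (fun y => f' y * g y) y + (fun y => f y * g' y) y). split. apply Gplus; apply Gmult; auto.
    intros y Hy. destruct (G_P0 _ HG1 y Hy) as [_ e1]. destruct (G_P0 _ HG2 y Hy) as [_ e2].
    unfold pd3. rewrite (Derive_mult (fun t => f (upd3 y i t)) (fun t => g (upd3 y i t))); auto.
    rewrite upd_coord3. rewrite <- Ef, <- Eg by auto. reflexivity.
Qed.

Lemma G_smooth g : (exists g0, G g0 /\ forall y, Vgood y -> g y = g0 y) -> smooth3 Vgood g.
Proof. apply family_smooth. apply G_P0. intros; apply G_deriv; auto. Qed.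

Ltac toR := match goal with |- ?a = ?b => change (a = b :> R) end.

Lemma my_minus (f g : R -> R) x a b : is_derive f x a -> is_derive g x b -> is_derive (fun u => f u - g u) x (a - b).
Proof. intros H H0. exact (is_derive_minus f g x a b H H0). Qed.

Lemma is_derive_eq (f : R -> R) x a b : is_derive f x a -> a = b -> is_derive f x b.
Proof. intros H ->; exact H. Qed.

Lemma const_of_deriv0 (w : R -> R) : (forall u, is_derive w u 0) -> forall a b, w b = w a.
Proof.
  intros H a b. destruct (MVT_gen w a b (fun _ => 0)) as [c [_ Hc]].
  - intros x _. apply H.
  - intros x _. apply continuity_pt_filterlim. apply (ex_derive_continuous (V:=R_NormedModule)).
    eexists; apply H.
  - lra.
Qed.

Lemma flow (A : covfield) y1 y3 y4 : y1 > 0 ->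
  (forall i, (1 <= i <= 4)%nat -> smooth4 Ugood (A i)) ->
  (forall i x, (1 <= i <= 4)%nat -> Ugood x -> lie (vf_sub e12 e14) A i x = 0) ->
  forall u,
  let G := fun u => (- u * y1, (y4 - / 2 * u ^ 2 * y1 ^ 2) * / y1, y3, y1 - (y4 - / 2 * u ^ 2 * y1 ^ 2) * / y1) in
   A 4%nat (G u) = A 2%nat (G u) + (A 4%nat (G 0) - A 2%nat (G 0)) /\
   A 1%nat (G u) = (A 4%nat (G 0) - A 2%nat (G 0)) * u + A 1%nat (G 0) /\
   A 2%nat (G u) = / 2 * (A 4%nat (G 0) - A 2%nat (G 0)) * u ^ 2 + A 1%nat (G 0) * u + A 2%nat (G 0) /\
   A 3%nat (G u) = A 3%nat (G 0).
Proof.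
  intros Hy HS HL u0 G.
  assert (HU : forall u, Ugood (G u)) by (intros u; unfold Ugood, G; simpl; ring_simplify; lra).
  assert (HD : forall k u, (1 <= k <= 4)%nat -> is_derive (fun u => A k (G u)) u (Dxi (A k) (G u))).
  { intros k u Hk. unfold G.
    eapply is_derive_eq.
    - apply (chain4_sm (A k) (G u) (fun u => - u * y1) (fun u => (y4 - / 2 * u ^ 2 * y1 ^ 2) * / y1) (fun _ => y3)
                (fun u => y1 - (y4 - / 2 * u ^ 2 * y1 ^ 2) * / y1));
      [apply HS; lia | apply HU | reflexivity | auto_derive; [exact I|reflexivity] ..].
    - unfold Dxi. destruct (xi_val (- u * y1) ((y4 - / 2 * u ^ 2 * y1 ^ 2) * / y1) y3
         (y1 - (y4 - / 2 * u ^ 2 * y1 ^ 2) * / y1)) as [-> [-> [-> ->]]].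
      unfold G. match goal with |- ?a = ?b => change (a = b :> R) end. field. lra. }
  assert (HLe : forall u, Dxi (A 1%nat) (G u) = A 4%nat (G u) - A 2%nat (G u) /\
                          Dxi (A 2%nat) (G u) = A 1%nat (G u) /\
                          Dxi (A 3%nat) (G u) = 0 /\ Dxi (A 4%nat) (G u) = A 1%nat (G u)).
  { intros u. destruct (lie_expand A (G u)) as [L1 [L2 [L3 L4]]].
    pose proof (HL 1%nat (G u) ltac:(lia) (HU u)). pose proof (HL 2%nat (G u) ltac:(lia) (HU u)).
    pose proof (HL 3%nat (G u) ltac:(lia) (HU u)). pose proof (HL 4%nat (G u) ltac:(lia) (HU u)).
    change (vf_sub e12 e14) with xi in *. repeat split; lra. }
  set (c2 := A 4%nat (G 0) - A 2%nat (G 0)).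
  set (c3 := A 1%nat (G 0)).
  set (c1 := A 2%nat (G 0)).
  assert (W : forall u, A 4%nat (G u) - A 2%nat (G u) = c2).
  { intros u. apply (const_of_deriv0 (fun u => A 4%nat (G u) - A 2%nat (G u))).
    intros v. eapply is_derive_eq. apply my_minus; apply HD; lia.
    destruct (HLe v) as [_ [E2 [_ E4]]]. rewrite E2, E4. toR; ring. }
  assert (V1 : forall u, A 1%nat (G u) - c2 * u = c3).
  { intros u. replace c3 with (A 1%nat (G 0) - c2 * 0) by (unfold c3; ring).
    apply (const_of_deriv0 (fun u => A 1%nat (G u) - c2 * u)).
    intros v. eapply is_derive_eq. apply my_minus; [apply HD; lia|].
    apply (is_derive_eq (fun u => c2 * u) v (c2 * 1)); [auto_derive; try exact I; try (toR; ring) | reflexivity].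
    destruct (HLe v) as [E1 _]. rewrite E1, W. toR; ring. }
  assert (Q2 : forall u, A 2%nat (G u) - (/ 2 * c2 * u ^ 2 + c3 * u) = c1).
  { intros u. replace c1 with (A 2%nat (G 0) - (/ 2 * c2 * 0 ^ 2 + c3 * 0)) by (unfold c1; ring).
    apply (const_of_deriv0 (fun u => A 2%nat (G u) - (/ 2 * c2 * u ^ 2 + c3 * u))).
    intros v. eapply is_derive_eq. apply my_minus; [apply HD; lia|].
    apply (is_derive_eq _ v (c2 * v + c3)); [auto_derive; try exact I; try (toR; field) | reflexivity].
    destruct (HLe v) as [_ [E2 _]]. rewrite E2. specialize (V1 v). toR; lra. }
  assert (H3 : forall u, A 3%nat (G u) = A 3%nat (G 0)).
  { intros u. apply (const_of_deriv0 (fun u => A 3%nat (G u))).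
    intros v. eapply is_derive_eq. apply HD; lia. apply HLe. }
  split; [specialize (W u0); lra|].
  split; [specialize (V1 u0); lra|].
  split; [specialize (Q2 u0); lra|].
  apply H3.
Qed.

Lemma tup4_eq (a1 a2 a3 a4 b1 b2 b3 b4 : R) : a1 = b1 -> a2 = b2 -> a3 = b3 -> a4 = b4 ->
  (a1, a2, a3, a4) = (b1, b2, b3, b4).
Proof. intros -> -> -> ->; reflexivity. Qed.

Theorem mainTheorem3 (A : covfield) :
  (forall i : nat, (1 <= i <= 4)%nat -> smooth4 Ugood (A i)) ->
  ((forall (i : nat) (x : R4), (1 <= i <= 4)%nat -> Ugood x ->
      lie (vf_sub e12 e14) A i x = 0)
   <->
   exists C1 C2 C3 B : R3 -> R,
     smooth3 Vgood C1 /\ smooth3 Vgood C2 /\ smooth3 Vgood C3 /\ smooth3 Vgood B /\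
     forall x : R4, Ugood x ->
       let y := (tx1 x, tx3 x, tx4 x) in
       A 1%nat x = C2 y * tx2 x + C3 y /\
       A 2%nat x = / 2 * C2 y * (tx2 x) ^ 2 + C3 y * tx2 x + C1 y /\
       A 3%nat x = B y /\
       A 4%nat x = A 2%nat x + C2 y).
Proof.
  intros HS. split.
  - intros HL.
    exists (fun y => A 2%nat (sig y)), (fun y => A 4%nat (sig y) - A 2%nat (sig y)),
           (fun y => A 1%nat (sig y)), (fun y => A 3%nat (sig y)).
    split; [apply G_smooth; exists (fun y => A 2%nat (sig y)); split; [apply GA, HS; lia | intros; reflexivity]|].
    split.
    { apply G_smooth.
      exists (fun y => (fun y => A 4%nat (sig y)) y + (fun y => (fun _ => -1) y * (fun y => A 2%nat (sig y)) y) y).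
      split; [apply Gplus; [apply GA, HS; lia | apply Gmult; [apply Gc | apply GA, HS; lia]]|].
      intros; ring. }
    split; [apply G_smooth; exists (fun y => A 1%nat (sig y)); split; [apply GA, HS; lia | intros; reflexivity]|].
    split; [apply G_smooth; exists (fun y => A 3%nat (sig y)); split; [apply GA, HS; lia | intros; reflexivity]|].
    intros [[[x1 x2] x3] x4] Hx. cbv beta zeta.
    unfold tx1, tx2, tx3, tx4.
    change (coord4 (x1, x2, x3, x4) 1) with x1.
    change (coord4 (x1, x2, x3, x4) 2) with x2.
    change (coord4 (x1, x2, x3, x4) 3) with x3.
    change (coord4 (x1, x2, x3, x4) 4) with x4.
    unfold Ugood in Hx. change (x2 + x4 > 0) in Hx.
    pose proof (flow A (x2 + x4) x3 (/ 2 * x1 ^ 2 + x2 * (x2 + x4)) Hx HS HL (- x1 / (x2 + x4))) as F.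
    cbv beta zeta in F.
    set (s := - x1 / (x2 + x4)) in *.
    assert (Es : (- s * (x2 + x4),
       (/ 2 * x1 ^ 2 + x2 * (x2 + x4) - / 2 * s ^ 2 * (x2 + x4) ^ 2) * / (x2 + x4), x3,
       x2 + x4 - (/ 2 * x1 ^ 2 + x2 * (x2 + x4) - / 2 * s ^ 2 * (x2 + x4) ^ 2) * / (x2 + x4)) = (x1, x2, x3, x4)).
    { unfold s. apply tup4_eq; try field; lra. }
    assert (E0 : (- 0 * (x2 + x4),
       (/ 2 * x1 ^ 2 + x2 * (x2 + x4) - / 2 * 0 ^ 2 * (x2 + x4) ^ 2) * / (x2 + x4), x3,
       x2 + x4 - (/ 2 * x1 ^ 2 + x2 * (x2 + x4) - / 2 * 0 ^ 2 * (x2 + x4) ^ 2) * / (x2 + x4))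
       = sig (x2 + x4, x3, / 2 * x1 ^ 2 + x2 * (x2 + x4))).
    { unfold sig. change (coord3 (x2 + x4, x3, / 2 * x1 ^ 2 + x2 * (x2 + x4)) 1) with (x2 + x4).
      change (coord3 (x2 + x4, x3, / 2 * x1 ^ 2 + x2 * (x2 + x4)) 2) with x3.
      change (coord3 (x2 + x4, x3, / 2 * x1 ^ 2 + x2 * (x2 + x4)) 3) with (/ 2 * x1 ^ 2 + x2 * (x2 + x4)).
      apply tup4_eq; try field; lra. }
    rewrite Es, E0 in F. destruct F as [F4 [F1 [F2 F3]]].
    split; [rewrite F1; ring|].
    split; [rewrite F2; ring|].
    split; [exact F3|].
    rewrite F4. ring.
  - intros [C1 [C2 [C3 [B [S1 [S2 [S3 [SB H]]]]]]]].
    apply (backward A C1 C2 C3 B S1 S2 S3 SB).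
    intros x Hx. exact (H x Hx).
Qed.
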